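(* Fix one of the ground state sequences (A) or (B) and $m\in\mathbb Z$. Let $b\in B_{\mathrm{aff}}$ satisfy $H(b\otimes b^\circ_m)\le0$. Then $G(b)\wedge|m\rangle=0$ in the Fock space $\mathcal F_{m-1}$ (i.e. the image in $\mathcal F_{m-1}$ of $G(b)\wedge\overline{|m\rangle}\in\bar{\mathcal F}_{m-1}$ vanishes; equivalently $G(b)\wedge\overline{|m\rangle}\in\bigcap_{n>0}q^nL(\bar{\mathcal F}_{m-1})$).
   Context: Let $\mathfrak g=\widehat{\mathfrak{sl}}_2$, $I=\{0,1\}$, weight lattice $P=\mathbb Z\Lambda_0\oplus\mathbb Z\Lambda_1\oplus\mathbb Z\delta$, coroots $h_0,h_1$ with $\langle h_i,\Lambda_j\rangle=\delta_{ij}$, $\langle h_i,\delta\rangle=0$, central element $c=h_0+h_1$. $U_q(\mathfrak g)$ is the quantum affine algebra over $\mathbb Q(q)$ with generators $e_i,f_i$ ($i\in I$), $q^h$ ($h\in P^*$), $t_i=q^{h_i}$, and coproduct $\Delta(q^h)=q^h\otimes q^h$, $\Delta(e_i)=e_i\otimes1+t_i^{-1}\otimes e_i$, $\Delta(f_i)=f_i\otimes t_i+1\otimes f_i$. $[n]=(q^n-q^{-n})/(q-q^{-1})$; $A\subset\mathbb Q(q)$ is the ring of rational functions regular at $q=0$. Let $J=\{0,1,2\}$. $V_{\mathrm{aff}}$ is the $\mathbb Q(q)$-space with basis $z^av_j$ ($a\in\mathbb Z$, $j\in J$), a $U_q(\mathfrak g)$-module via: $\mathrm{wt}(z^av_j)=2(1-j)(\Lambda_1-\Lambda_0)+a\delta$,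 $q^hz^av_j=q^{\langle h,\mathrm{wt}(z^av_j)\rangle}z^av_j$, $e_1z^av_j=[3-j]z^av_{j-1}$, $f_1z^av_j=[j+1]z^av_{j+1}$, $e_0z^av_j=[j+1]z^{a+1}v_{j+1}$, $f_0z^av_j=[3-j]z^{a-1}v_{j-1}$ (with $v_{-1}=v_3=0$). The operator $z^b$ sends $z^av_j\mapsto z^{a+b}v_j$. The crystal of $V_{\mathrm{aff}}$ is $B_{\mathrm{aff}}=\{z^ab_j\}$ with lower global base $G(z^ab_j)=z^av_j$; the energy function is $H(z^ab_i\otimes z^{a'}b_j)=\min\{i,2-j\}-a+a'$. $N\subset V_{\mathrm{aff}}\otimes V_{\mathrm{aff}}$ is the smallest subspace containing $v_0\otimes v_0$ that is stable under the action of $U_q(\mathfrak g)$ (via $\Delta$) and under the operators $z\otimes z$, $z^{-1}\otimes z^{-1}$, $z\otimes1+1\otimes z$. For $n\ge2$, $N_n=\sum_{r=0}^{n-2}V_{\mathrm{aff}}^{\otimes r}\otimes N\otimes V_{\mathrm{aff}}^{\otimes(n-r-2)}$, $\bigwedge^nV_{\mathrm{aff}}:=V_{\mathrm{aff}}^{\otimes n}/N_n$, and $L(\bigwedge^nV_{\mathrm{aff}})$ is the image of the $A$-lattice spanned by all $G(c_1)\otimes\cdots\otimes G(c_n)$, $c_r\in B_{\mathrm{aff}}$. Ground state sequences: (A) $b^\circ_m=zb_2$ for $m$ even, $b^\circ_m=b_0$ for $m$ odd; (B) $b^\circ_m=b_1$ for all $m$. Put $v^\circ_m=G(b^\circ_m)$.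 The pre-Fock space $\bar{\mathcal F}_m$ is the inductive limit of the spaces $\bigwedge^rV_{\mathrm{aff}}$ ($r\ge0$) along the maps $u\mapsto u\wedge v^\circ_{m+r}$; the image of $u\in\bigwedge^rV_{\mathrm{aff}}$ is written $u\wedge\overline{|m+r\rangle}$ (the formal semi-infinite wedge $u\wedge v^\circ_{m+r}\wedge v^\circ_{m+r+1}\wedge\cdots$), and $\overline{|m\rangle}$ is the image of $1\in\bigwedge^0V_{\mathrm{aff}}=\mathbb Q(q)$. $L(\bar{\mathcal F}_m)$ is the $A$-span of the images of the $L(\bigwedge^rV_{\mathrm{aff}})$. The Fock space is $\mathcal F_m=\bar{\mathcal F}_m/\bigcap_{n>0}q^nL(\bar{\mathcal F}_m)$, $|m\rangle$ is the image of $\overline{|m\rangle}$, $L(\mathcal F_m)$ is the image of $L(\bar{\mathcal F}_m)$, and $\mathcal F_m$ carries the $q$-adic topology with neighborhood basis of $0$ given by $\{q^nL(\mathcal F_m)\}_{n\ge0}$ (it is separated). *)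

(* Defs.v *)
From HB Require Import structures.
From mathcomp Require Import all_boot all_order all_algebra.
Set Implicit Arguments. Unset Strict Implicit. Unset Printing Implicit Defensive.
Import Order.TTheory GRing.Theory Num.Theory.
Local Open Scope ring_scope.

Definition K : fieldType := {fraction {poly rat}}.
Definition tofr (p : {poly rat}) : K := @FracField.tofrac _ p.
Local Notation "x %:F" := (tofr x).
Definition q : K := (('X : {poly rat}))%:F.

Definition qint (n : int) : K := (q ^ n - q ^ (- n)) / (q - q^-1).

Definition inA (f : K) : Prop :=
  exists (p r : {poly rat}), r.[0] != 0 /\ f = p%:F / r%:F.

(* Basis of V_aff: z^a v_j  <->  (a, j), a : int, j : J = {0,1,2}.
   As crystal elements this is also z^a b_j, with G(z^a b_j) = z^a v_j. *)
Definition bas := (int * 'I_3)%type.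
Definition word := seq bas.
(* Vectors: formal K-linear combinations of basis words (tensor elements). *)
Definition Vec := seq (K * word).

Definition coef (v : Vec) (w : word) : K := \sum_(p <- v | p.2 == w) p.1.
Definition veq (v v' : Vec) : Prop := forall w, coef v w = coef v' w.
Definition scale (c : K) (v : Vec) : Vec := [seq (c * p.1, p.2) | p <- v].
Definition vsum (l : seq Vec) : Vec := flatten l.
Definition linext (F : word -> Vec) (v : Vec) : Vec :=
  flatten [seq scale p.1 (F p.2) | p <- v].

(* Weights: wt(z^a v_j) = 2(1-j)(Lambda_1 - Lambda_0) + a delta, recorded by its
   coordinates on (Lambda_0, Lambda_1, delta). *)
Definition wt (b : bas) : int * int * int :=
  let j := (nat_of_ord b.2)%:Z in (- (2 * (1 - j)), 2 * (1 - j), b.1).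
Definition wtw (w : word) : int * int * int :=
  foldr (fun b s => (((wt b).1.1 + s.1.1), ((wt b).1.2 + s.1.2), ((wt b).2 + s.2)))
        (0, 0, 0) w.
(* P^* = Z h_0 + Z h_1 + Z d (dual basis to Lambda_0, Lambda_1, delta);
   h = (c0, c1, cd) stands for c0 h_0 + c1 h_1 + cd d. *)
Definition pair (h wt : int * int * int) : int :=
  h.1.1 * wt.1.1 + h.1.2 * wt.1.2 + h.2 * wt.2.
Definition hcor (i : bool) : int * int * int :=   (* i = false: h_0, true: h_1 *)
  if i then (0, 1, 0) else (1, 0, 0).

(* Action of e_i, f_i on one factor V_aff (i = false is 0, i = true is 1). *)
Definition e_one (i : bool) (b : bas) : seq (K * bas) :=
  let a := b.1 in let j := nat_of_ord b.2 in
  if i then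
    (if (0 < j)%N then [:: (qint (3 - j)%N, (a, inord j.-1))] else [::])
  else
    (if (j < 2)%N then [:: (qint j.+1, (a + 1, inord j.+1))] else [::]).
Definition f_one (i : bool) (b : bas) : seq (K * bas) :=
  let a := b.1 in let j := nat_of_ord b.2 in
  if i then
    (if (j < 2)%N then [:: (qint j.+1, (a, inord j.+1))] else [::])
  else
    (if (0 < j)%N then [:: (qint (3 - j)%N, (a - 1, inord j.-1))] else [::]).

(* Action on tensor products through the (iterated) coproduct
   Delta(e_i) = e_i (x) 1 + t_i^-1 (x) e_i,  Delta(f_i) = f_i (x) t_i + 1 (x) f_i,
   Delta(q^h) = q^h (x) q^h. *)
Fixpoint actE (i : bool) (w : word) : Vec :=
  match w with
  | [::] => [::]
  | b :: w' => [seq (c.1, c.2 :: w') | c <- e_one i b] ++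
               [seq (q ^ (- pair (hcor i) (wt b)) * c.1, b :: c.2) | c <- actE i w']
  end.
Fixpoint actF (i : bool) (w : word) : Vec :=
  match w with
  | [::] => [::]
  | b :: w' => [seq (c.1 * q ^ (pair (hcor i) (wtw w')), c.2 :: w') | c <- f_one i b] ++
               [seq (c.1, b :: c.2) | c <- actF i w']
  end.
Definition actK (h : int * int * int) (w : word) : Vec := [:: (q ^ (pair h (wtw w)), w)].

Definition zsh (k : int) (b : bas) : bas := (b.1 + k, b.2).
Definition zz (k : int) (w : word) : Vec := [:: (1, map (zsh k) w)].
Definition zsum (w : word) : Vec :=
  match w with
  | [:: b1; b2] => [:: (1, [:: zsh 1 b1; b2]); (1, [:: b1; zsh 1 b2])]
  | _ => [::]
  end.

Definition subspace (S : Vec -> Prop) : Prop :=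
  [/\ S [::], (forall x y, S x -> S y -> S (x ++ y)),
      (forall c x, S x -> S (scale c x)) & (forall x y, veq x y -> S x -> S y)].

Definition stableN (S : Vec -> Prop) : Prop :=
  (forall i x, S x -> S (linext (actE i) x)) /\
  (forall i x, S x -> S (linext (actF i) x)) /\
  (forall h x, S x -> S (linext (actK h) x)) /\
  (forall x, S x -> S (linext (zz 1) x)) /\
  (forall x, S x -> S (linext (zz (-1)) x)) /\
  (forall x, S x -> S (linext zsum x)).

Definition v0v0 : Vec := [:: (1, [:: (0%R, ord0); (0%R, ord0)])].

Definition inN (x : Vec) : Prop :=
  forall S, subspace S -> S v0v0 -> stableN S -> S x.

(* N_n = sum_r V^{(x) r} (x) N (x) V^{(x) (n-r-2)}: spanned by beta (x) y (x) gamma. *)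
Definition tens3 (beta : word) (y : Vec) (gamma : word) : Vec :=
  [seq (p.1, beta ++ p.2 ++ gamma) | p <- y].
Definition inNn (n : nat) (x : Vec) : Prop :=
  exists l : seq (word * Vec * word),
    (forall p, p \in l -> inN p.1.2 /\ (size p.1.1 + 2 + size p.2 = n)%N) /\
    veq x (vsum [seq tens3 p.1.1 p.1.2 p.2 | p <- l]).

(* L(V^{(x) t}) : A-span of the G(c_1) (x) ... (x) G(c_t); its image is L(wedge^t). *)
Definition inLat (t : nat) (x : Vec) : Prop :=
  exists l : Vec, (forall p, p \in l -> inA p.1 /\ size p.2 = t) /\ veq x l.

Inductive gss := GA | GB.
Definition gstate (g : gss) (m : int) : bas :=
  match g with
  | GA => if odd `|m|%N then (0%R, ord0) else (1%R, inord 2)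
  | GB => (0%R, inord 1)
  end.

Definition energy (b b' : bas) : int :=
  (minn (nat_of_ord b.2) (2 - nat_of_ord b'.2))%:Z - b.1 + b'.1.

(* Transition map of the inductive system defining bar F_{m'}:
   wedge^r -> wedge^t, u |-> u /\ v°_{m'+r} /\ ... /\ v°_{m'+t-1}
   (on representatives in V^{(x) r}). *)
Definition gsword (g : gss) (k : int) (len : nat) : word :=
  [seq gstate g (k + i%:Z) | i <- iota 0 len].
Definition push (g : gss) (m' : int) (r t : nat) (u : Vec) : Vec :=
  [seq (p.1, p.2 ++ gsword g (m' + r%:Z) (t - r)) | p <- u].

(* The element of bar F_{m'} represented by u in V^{(x) r} (i.e. u /\ bar|m'+r>)
   lies in q^n L(bar F_{m'}): it equals q^n times an A-linear combination of
   images of elements of L(wedge^{r_k}), equality in the inductive limit meaning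
   equality in wedge^t = V^{(x) t}/N_t for some common level t. *)
Definition in_qnL (g : gss) (m' : int) (n : nat) (r : nat) (u : Vec) : Prop :=
  exists (l : seq (K * nat * Vec)) (t : nat),
    (r <= t)%N /\
    (forall p, p \in l -> [/\ inA p.1.1, (p.1.2 <= t)%N & inLat p.1.2 p.2]) /\
    inNn t (push g m' r t u ++
            scale (- q ^+ n) (vsum [seq scale p.1.1 (push g m' p.1.2 t p.2) | p <- l])).

Definition Gvec (b : bas) : Vec := [:: (1, [:: b])].

(* Main.v *)
Require Import Defs.
From mathcomp Require Import all_boot all_order all_algebra.
From mathcomp Require Import ring zify.
Set Implicit Arguments. Unset Strict Implicit. Unset Printing Implicit Defensive.
Import Order.TTheory GRing.Theory Num.Theory.
Local Open Scope ring_scope.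

Lemma coef_nil w : coef [::] w = 0.
Proof. by rewrite /coef big_nil. Qed.
Lemma coef_cons p v w : coef (p :: v) w = (if p.2 == w then p.1 else 0) + coef v w.
Proof. by rewrite /coef big_cons; case: ifP => _; rewrite ?add0r. Qed.
Lemma coef_cat x y w : coef (x ++ y) w = coef x w + coef y w.
Proof. by rewrite /coef big_cat. Qed.
Lemma coef_scale c v w : coef (scale c v) w = c * coef v w.
Proof.
elim: v => [|p v IH]; first by rewrite /= !coef_nil mulr0.
rewrite /= !coef_cons IH mulrDr /=; by case: ifP => _; rewrite ?mulr0.
Qed.
Lemma coef_vsum (L : seq Vec) w : coef (vsum L) w = \sum_(x <- L) coef x w.
Proof.
elim: L => [|x L IH]; first by rewrite /= coef_nil big_nil.
by rewrite /vsum /= coef_cat big_cons -IH.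
Qed.
Lemma linext_cons F p v : linext F (p :: v) = scale p.1 (F p.2) ++ linext F v.
Proof. by []. Qed.
Lemma linext_cat F x y : linext F (x ++ y) = linext F x ++ linext F y.
Proof. by rewrite /linext map_cat flatten_cat. Qed.
Lemma coef_linext F v w : coef (linext F v) w = \sum_(p <- v) p.1 * coef (F p.2) w.
Proof.
elim: v => [|p v IH]; first by rewrite /linext /= coef_nil big_nil.
by rewrite linext_cons coef_cat coef_scale IH big_cons.
Qed.

Lemma veq_refl x : veq x x. Proof. by []. Qed.
Lemma veq_sym x y : veq x y -> veq y x. Proof. by move=> H w. Qed.
Lemma veq_trans x y z : veq x y -> veq y z -> veq x z.
Proof. by move=> H1 H2 w; rewrite H1. Qed.
Lemma veq_cat x y x' y' : veq x x' -> veq y y' -> veq (x ++ y) (x' ++ y').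
Proof. by move=> H1 H2 w; rewrite !coef_cat H1 H2. Qed.
Lemma veq_scale c x y : veq x y -> veq (scale c x) (scale c y).
Proof. by move=> H w; rewrite !coef_scale H. Qed.
Lemma scale_cat c x y : scale c (x ++ y) = scale c x ++ scale c y.
Proof. by rewrite /scale map_cat. Qed.
Lemma scaleA c d x : veq (scale c (scale d x)) (scale (c * d) x).
Proof. by move=> w; rewrite !coef_scale mulrA. Qed.
Lemma scale1 x : veq (scale 1 x) x.
Proof. by move=> w; rewrite coef_scale mul1r. Qed.
Lemma veq_cancel x : veq (x ++ scale (-1) x) [::].
Proof. by move=> w; rewrite coef_cat coef_scale coef_nil mulN1r subrr. Qed.
Lemma veq_catC x y : veq (x ++ y) (y ++ x).
Proof. by move=> w; rewrite !coef_cat addrC. Qed.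

Lemma inN_v0v0 : inN v0v0. Proof. by move=> S _ H _. Qed.
Lemma inN_nil : inN [::]. Proof. by move=> S [] . Qed.
Lemma inN_cat x y : inN x -> inN y -> inN (x ++ y).
Proof. move=> Hx Hy S HS H0 Hst; case: (HS) => _ Hc _ _; exact: Hc (Hx S HS H0 Hst) (Hy S HS H0 Hst). Qed.
Lemma inN_scale c x : inN x -> inN (scale c x).
Proof. move=> Hx S HS H0 Hst; case: (HS) => _ _ Hc _; exact: Hc (Hx S HS H0 Hst). Qed.
Lemma inN_veq x y : veq x y -> inN x -> inN y.
Proof. move=> Hxy Hx S HS H0 Hst; case: (HS) => _ _ _ Hc; exact: Hc _ _ Hxy (Hx S HS H0 Hst). Qed.
Lemma inN_E i x : inN x -> inN (linext (actE i) x).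
Proof. move=> Hx S HS H0 Hst; case: (Hst) => H _; exact: H (Hx S HS H0 Hst). Qed.
Lemma inN_F i x : inN x -> inN (linext (actF i) x).
Proof. move=> Hx S HS H0 Hst; case: (Hst) => _ [H _]; exact: H (Hx S HS H0 Hst). Qed.
Lemma inN_zz1 x : inN x -> inN (linext (zz 1) x).
Proof. move=> Hx S HS H0 Hst; case: (Hst) => _ [_ [_ [H _]]]; exact: H (Hx S HS H0 Hst). Qed.
Lemma inN_zzm x : inN x -> inN (linext (zz (-1)) x).
Proof. move=> Hx S HS H0 Hst; case: (Hst) => _ [_ [_ [_ [H _]]]]; exact: H (Hx S HS H0 Hst). Qed.
Lemma inN_zsum x : inN x -> inN (linext zsum x).
Proof. move=> Hx S HS H0 Hst; case: (Hst) => _ [_ [_ [_ [_ H]]]]; exact: H (Hx S HS H0 Hst). Qed.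

Lemma inNn_veq t x y : veq x y -> inNn t x -> inNn t y.
Proof. move=> Hxy [l [Hl Hv]]; exists l; split => // w; rewrite -Hxy; exact: Hv. Qed.
Lemma inNn_nil t : inNn t [::].
Proof. by exists [::]; split => // w; rewrite /= coef_nil. Qed.
Lemma inNn_cat t x y : inNn t x -> inNn t y -> inNn t (x ++ y).
Proof.
move=> [l1 [H1 V1]] [l2 [H2 V2]]; exists (l1 ++ l2); split.
  by move=> p; rewrite mem_cat => /orP [/H1|/H2].
by move=> w; rewrite coef_cat V1 V2 map_cat /vsum flatten_cat coef_cat.
Qed.
Lemma tens3_scale c beta y gamma : tens3 beta (scale c y) gamma = scale c (tens3 beta y gamma).
Proof. by rewrite /tens3 /scale -!map_comp. Qed.
Lemma inNn_scale t c x : inNn t x -> inNn t (scale c x).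
Proof.
move=> [l [H1 V1]]; exists [seq (p.1.1, scale c p.1.2, p.2) | p <- l]; split.
  move=> p /mapP [p0 Hp0 ->] /=; have [HN Hs] := H1 _ Hp0; split => //; exact: inN_scale.
move=> w; rewrite coef_scale V1 !coef_vsum big_distrr !big_map /=.
by apply: eq_bigr => p _; rewrite tens3_scale coef_scale.
Qed.
Lemma inNn_tens3 t beta y gamma : inN y -> (size beta + 2 + size gamma)%N = t ->
  inNn t (tens3 beta y gamma).
Proof.
move=> Hy Ht; exists [:: (beta, y, gamma)]; split.
  by move=> p; rewrite inE => /eqP -> /=.
by move=> w; rewrite /= coef_cat coef_nil addr0.
Qed.
Lemma tens3_cat beta x y gamma : tens3 beta (x ++ y) gamma = tens3 beta x gamma ++ tens3 beta y gamma.
Proof. by rewrite /tens3 map_cat. Qed.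

Definition appw (x : Vec) (s : word) : Vec := [seq (p.1, p.2 ++ s) | p <- x].
Lemma cat_eqr (u v s : word) : (u ++ s == v ++ s) = (u == v).
Proof.
apply/eqP/eqP => [H|->//].
have : rev (u ++ s) = rev (v ++ s) by rewrite H.
rewrite !rev_cat => /eqP; rewrite eqseq_cat // => /andP [_ /eqP]; by move=> E; rewrite -(revK u) E revK.
Qed.
Lemma coef_appw x s w : coef (appw x s) w = \sum_(p <- x | p.2 ++ s == w) p.1.
Proof. by rewrite /coef big_map. Qed.
Lemma veq_appw x y s : veq x y -> veq (appw x s) (appw y s).
Proof.
move=> H w; rewrite !coef_appw.
case: (boolP (suffix s w)) => [/suffixP [u ->]|Hn].
  have E z : \sum_(p <- z | p.2 ++ s == u ++ s) p.1 = coef z u.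
    by apply: eq_bigl => p; rewrite cat_eqr.
  by rewrite !E H.
have E z : \sum_(p <- z | p.2 ++ s == w) p.1 = 0.
  rewrite big_pred0 // => p; apply/negP => /eqP Hw; move: Hn; by rewrite -Hw suffix_suffix.
by rewrite !E.
Qed.
Lemma appw_cat x y s : appw (x ++ y) s = appw x s ++ appw y s.
Proof. by rewrite /appw map_cat. Qed.
Lemma appw_scale c x s : appw (scale c x) s = scale c (appw x s).
Proof. by rewrite /appw /scale -!map_comp. Qed.
Lemma inNn_appw t x s : inNn t x -> inNn (t + size s) (appw x s).
Proof.
move=> [l [H1 V1]]; exists [seq (p.1.1, p.1.2, p.2 ++ s) | p <- l]; split.
  move=> p /mapP [p0 Hp0 ->] /=; have [HN Hs] := H1 _ Hp0; split => //.
  by rewrite size_cat -Hs addnA.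
have -> : vsum [seq tens3 p.1.1 p.1.2 p.2 | p <- [seq (p.1.1, p.1.2, p.2 ++ s) | p <- l]]
   = appw (vsum [seq tens3 p.1.1 p.1.2 p.2 | p <- l]) s.
  rewrite -map_comp /vsum /appw map_flatten -map_comp; congr flatten; apply: eq_map => p /=.
  by rewrite /tens3 -map_comp; apply: eq_map => r /=; rewrite -!catA.
exact: veq_appw.
Qed.

Lemma tofrD p r : tofr (p + r) = tofr p + tofr r. Proof. exact: tofracD. Qed.
Lemma tofrM p r : tofr (p * r) = tofr p * tofr r. Proof. exact: tofracM. Qed.
Lemma tofrN p : tofr (- p) = - tofr p. Proof. exact: tofracN. Qed.
Lemma tofr1 : tofr 1 = 1. Proof. exact: tofrac1. Qed.
Lemma tofr0 : tofr 0 = 0. Proof. exact: tofrac0. Qed.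
Lemma tofrX p n : tofr (p ^+ n) = tofr p ^+ n. Proof. exact: tofracXn. Qed.
Lemma tofr_neq0 p : p.[0] != 0 -> tofr p != 0.
Proof. move=> H; rewrite /tofr tofrac_eq0; apply/eqP => E; by move: H; rewrite E horner0 eqxx. Qed.

Lemma inA_tofr p : inA (tofr p).
Proof. exists p, 1; split; first by rewrite hornerC oner_eq0. by rewrite tofr1 divr1. Qed.
Lemma inA_add f g : inA f -> inA g -> inA (f + g).
Proof.
move=> [p1 [r1 [H1 ->]]] [p2 [r2 [H2 ->]]].
exists (p1 * r2 + p2 * r1), (r1 * r2); split; first by rewrite hornerM mulf_neq0.
have n1 := tofr_neq0 H1; have n2 := tofr_neq0 H2.
by rewrite tofrD !tofrM addf_div.
Qed.
Lemma inA_mul f g : inA f -> inA g -> inA (f * g).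
Proof.
move=> [p1 [r1 [H1 ->]]] [p2 [r2 [H2 ->]]].
exists (p1 * p2), (r1 * r2); split; first by rewrite hornerM mulf_neq0.
have n1 := tofr_neq0 H1; have n2 := tofr_neq0 H2.
by rewrite !tofrM mulf_div.
Qed.
Lemma inA_opp f : inA f -> inA (- f).
Proof. move=> [p1 [r1 [H1 ->]]]; exists (- p1), r1; split => //; by rewrite tofrN mulNr. Qed.
Lemma inA_1 : inA 1. Proof. by rewrite -tofr1; exact: inA_tofr. Qed.
Lemma inA_0 : inA 0. Proof. by rewrite -tofr0; exact: inA_tofr. Qed.
Lemma inA_q : inA q. Proof. exact: inA_tofr. Qed.
Lemma inA_exp f n : inA f -> inA (f ^+ n).
Proof. move=> H; elim: n => [|n IH]; [exact: inA_1| rewrite exprS; exact: inA_mul]. Qed.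
Lemma inA_eq f g : f = g -> inA g -> inA f. Proof. by move=> ->. Qed.
Lemma inA_int (z : int) : inA (z%:~R).
Proof.
case: z => n; last first.
  rewrite NegzE mulrNz; apply: inA_opp.
  elim: n.+1 => [|k IH]; first exact: inA_0.
  by rewrite -addn1 PoszD mulrzDr; apply: inA_add => //; rewrite mulr1z; exact: inA_1.
elim: n => [|k IH]; first exact: inA_0.
by rewrite -addn1 PoszD mulrzDr; apply: inA_add => //; rewrite mulr1z; exact: inA_1.
Qed.

Lemma q_neq0 : q != 0.
Proof. by rewrite /q /tofr tofrac_eq0 polyX_eq0. Qed.
Lemma nz_q2m1 : q ^+ 2 - 1 != 0.
Proof.
have -> : q ^+ 2 - 1 = tofr ('X ^+ 2 - 1) by rewrite tofrD tofrN tofr1 tofrX.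
apply: tofr_neq0; by rewrite !hornerE ?expr0n /= ?addr0 ?add0r ?oppr_eq0 ?oner_eq0.
Qed.
Lemma nz_p2 : 1 + q ^+ 2 != 0.
Proof.
have -> : 1 + q ^+ 2 = tofr (1 + 'X ^+ 2) by rewrite tofrD tofr1 tofrX.
apply: tofr_neq0; by rewrite !hornerE ?expr0n /= ?addr0 ?add0r ?oppr_eq0 ?oner_eq0.
Qed.
Lemma nz_p3 : 1 + q ^+ 2 + q ^+ 4 != 0.
Proof.
have -> : 1 + q ^+ 2 + q ^+ 4 = tofr (1 + 'X ^+ 2 + 'X ^+ 4) by rewrite !tofrD tofr1 !tofrX.
apply: tofr_neq0; by rewrite !hornerE ?expr0n /= ?addr0 ?add0r ?oppr_eq0 ?oner_eq0.
Qed.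
Lemma nz_p4 : 1 + q ^+ 2 + q ^+ 4 + q ^+ 6 != 0.
Proof.
have -> : 1 + q ^+ 2 + q ^+ 4 + q ^+ 6 = tofr (1 + 'X ^+ 2 + 'X ^+ 4 + 'X ^+ 6) by rewrite !tofrD tofr1 !tofrX.
apply: tofr_neq0; by rewrite !hornerE ?expr0n /= ?addr0 ?add0r ?oppr_eq0 ?oner_eq0.
Qed.
Definition qintF (F : fieldType) (x : F) (n : int) := (x ^ n - x ^ (- n)) / (x - x^-1).
Lemma qint_F n : qint n = qintF q n. Proof. by []. Qed.
Lemma qinv_neF (F : fieldType) (x : F) : x != 0 -> x ^+ 2 - 1 != 0 -> x - x^-1 != 0.
Proof.
move=> h1 h2; have -> : x - x^-1 = (x ^+ 2 - 1) / x by field.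
by rewrite mulf_neq0 ?invr_eq0.
Qed.
Lemma qinv_ne : q - q^-1 != 0.
Proof. exact: qinv_neF q_neq0 nz_q2m1. Qed.
Lemma qint1F (F : fieldType) (x : F) : x - x^-1 != 0 -> qintF x 1 = 1.
Proof. move=> h; rewrite /qintF; exact: divff. Qed.
Lemma qint2F (F : fieldType) (x : F) : x != 0 -> x ^+ 2 - 1 != 0 -> qintF x 2 = x + x^-1.
Proof.
move=> h1 h2; rewrite /qintF.
have -> : x ^ (2:int) - x ^ (- (2:int)) = x ^+ 2 - (x ^+ 2)^-1 by [].
field; by rewrite h1 -expr2 h2.
Qed.
Lemma qint3F (F : fieldType) (x : F) : x != 0 -> x ^+ 2 - 1 != 0 -> qintF x 3 = x ^+ 2 + 1 + (x ^+ 2)^-1.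
Proof.
move=> h1 h2; rewrite /qintF.
have -> : x ^ (3:int) - x ^ (- (3:int)) = x ^+ 3 - (x ^+ 3)^-1 by [].
field; by rewrite h1 -expr2 h2.
Qed.

Definition o1 : 'I_3 := @Ordinal 3 1 isT.
Definition o2 : 'I_3 := @Ordinal 3 2 isT.
Definition sinord (j : nat) : 'I_3 := match j with 1%N => o1 | 2%N => o2 | _ => ord0 end.
Lemma inord_sinord j : (inord j : 'I_3) = sinord j.
Proof.
case: j => [|[|[|j]]]; apply: val_inj; [by rewrite /= ?inordK..|].
by rewrite /inord val_insubd.
Qed.

Definition zpow (F : fieldType) (x : F) (k : int) : F :=
  match k with Posz n => x ^+ n | Negz n => (x ^+ n.+1)^-1 end.
Inductive cexp := CI of int | CQ of int | CN of int | CA of cexp & cexp | CM of cexp & cexp | CV of cexp.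
Fixpoint evF (F : fieldType) (x : F) (e : cexp) : F := match e with
 | CI z => z%:~R | CQ k => zpow x k | CN n => qintF x n | CA a b => evF x a + evF x b
 | CM a b => evF x a * evF x b | CV a => (evF x a)^-1 end.
Notation ev := (evF q).
Definition SV := seq (cexp * word).
Definition evV (v : SV) : Vec := [seq (ev p.1, p.2) | p <- v].
Definition se_one (i : bool) (b : bas) : seq (cexp * bas) :=
  let a := b.1 in let j := nat_of_ord b.2 in
  if i then
    (if (0 < j)%N then [:: (CN (3 - j)%N, (a, sinord j.-1))] else [::])
  else
    (if (j < 2)%N then [:: (CN j.+1, (a + 1, sinord j.+1))] else [::]).
Definition sf_one (i : bool) (b : bas) : seq (cexp * bas) :=
  let a := b.1 in let j := nat_of_ord b.2 in
  if i then
    (if (j < 2)%N then [:: (CN j.+1, (a, sinord j.+1))] else [::])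
  else
    (if (0 < j)%N then [:: (CN (3 - j)%N, (a - 1, sinord j.-1))] else [::]).
Fixpoint sactE (i : bool) (w : word) : SV :=
  match w with
  | [::] => [::]
  | b :: w' => [seq (c.1, c.2 :: w') | c <- se_one i b] ++
               [seq (CM (CQ (- pair (hcor i) (wt b))) c.1, b :: c.2) | c <- sactE i w']
  end.
Fixpoint sactF (i : bool) (w : word) : SV :=
  match w with
  | [::] => [::]
  | b :: w' => [seq (CM c.1 (CQ (pair (hcor i) (wtw w'))), c.2 :: w') | c <- sf_one i b] ++
               [seq (c.1, b :: c.2) | c <- sactF i w']
  end.
Definition sscale (c : cexp) (v : SV) : SV := [seq (CM c p.1, p.2) | p <- v].
Definition slinext (F : word -> SV) (v : SV) : SV := flatten [seq sscale p.1 (F p.2) | p <- v].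
Definition szz (k : int) (w : word) : SV := [:: (CI 1, map (zsh k) w)].
Definition sv0v0 : SV := [:: (CI 1, [:: (0%R, ord0); (0%R, ord0)])].

Lemma e_one_sh i b : e_one i b = [seq (ev p.1, p.2) | p <- se_one i b].
Proof. rewrite /e_one /se_one; case: i; case: ifP => _ //=; by rewrite inord_sinord. Qed.
Lemma f_one_sh i b : f_one i b = [seq (ev p.1, p.2) | p <- sf_one i b].
Proof. rewrite /f_one /sf_one; case: i; case: ifP => _ //=; by rewrite inord_sinord. Qed.
Lemma actE_sh i w : actE i w = evV (sactE i w).
Proof.
elim: w => [//|b w IH] /=; rewrite /evV map_cat -!map_comp e_one_sh IH /evV -!map_comp.
by congr (_ ++ _); apply: eq_map.
Qed.
Lemma actF_sh i w : actF i w = evV (sactF i w).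
Proof.
elim: w => [//|b w IH] /=; rewrite /evV map_cat -!map_comp f_one_sh IH /evV -!map_comp.
by congr (_ ++ _); apply: eq_map.
Qed.
Lemma zz_sh k w : zz k w = evV (szz k w).
Proof. by []. Qed.
Lemma v0v0_sh : v0v0 = evV sv0v0. Proof. by []. Qed.
Lemma scale_sh c x : scale (ev c) (evV x) = evV (sscale c x).
Proof. by rewrite /scale /evV /sscale -!map_comp. Qed.
Lemma linext_sh F sF v : (forall w, F w = evV (sF w)) -> linext F (evV v) = evV (slinext sF v).
Proof.
move=> H; elim: v => [//|p v IH].
rewrite /= linext_cons /= IH H scale_sh /evV /slinext /= map_cat //.
Qed.

Definition scoef (x : SV) (u : word) : cexp := foldr CA (CI 0) [seq p.1 | p <- x & p.2 == u].
Definition pairsL (x y : SV) : seq (cexp * cexp) :=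
  [seq (scoef x u, scoef y u) | u <- undup (map snd (x ++ y))].
Fixpoint allEq (L : seq (cexp * cexp)) : Prop :=
  match L with [::] => True | p :: L => ev p.1 = ev p.2 /\ allEq L end.
Lemma coef_evV x u : coef (evV x) u = ev (scoef x u).
Proof.
elim: x => [|p x IH]; first by rewrite coef_nil.
rewrite coef_cons IH /scoef /=; case: ifP => _ //=; by rewrite add0r.
Qed.
Lemma scoef_out x u : u \notin map snd x -> scoef x u = CI 0.
Proof.
elim: x => [//|p x IH]; rewrite /= inE negb_or => /andP [H1 H2].
by rewrite /scoef /= eq_sym (negbTE H1) -/(scoef x u) IH.
Qed.
Lemma veq_chk x y : allEq (pairsL x y) -> veq (evV x) (evV y).
Proof.
move=> H w; rewrite !coef_evV.
case: (boolP (w \in undup (map snd (x ++ y)))) => Hw; last first.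
  rewrite mem_undup map_cat mem_cat negb_or in Hw; case/andP: Hw => H1 H2.
  by rewrite !scoef_out.
move: H Hw; rewrite /pairsL; elim: (undup _) => [//|u L IHL] /= [Hu HL].
rewrite inE => /orP [/eqP ->//|]; exact: IHL.
Qed.
Lemma evF_gen e1 e2 : (forall (F : fieldType) (x : F), x != 0 -> x ^+ 2 - 1 != 0 ->
   1 + x ^+ 2 != 0 -> 1 + x ^+ 2 + x ^+ 4 != 0 -> 1 + x ^+ 2 + x ^+ 4 + x ^+ 6 != 0 ->
   evF x e1 = evF x e2) -> ev e1 = ev e2.
Proof. move=> H; apply: H; [exact: q_neq0|exact: nz_q2m1|exact: nz_p2|exact: nz_p3|exact: nz_p4]. Qed.

Ltac comp_pairs := match goal with |- allEq ?L =>
  let L' := eval vm_compute in L in replace L with L' by (vm_compute; reflexivity) end.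

Lemma qint1F' (F : fieldType) (x : F) : x != 0 -> x ^+ 2 - 1 != 0 -> qintF x 1 = 1.
Proof. move=> h1 h2; apply: qint1F; exact: qinv_neF. Qed.

Lemma gid1 (R : comRingType) (a a' b b' c : R) : a + a' + c * (b + b') = a + c * b + (a' + c * b').
Proof. ring. Qed.
Lemma gid2 (R : comRingType) (a b c d : R) : c * (a + d * b) = c * a + d * (c * b).
Proof. ring. Qed.
Lemma gid3 (R : comRingType) (a b c : R) : c * (a + - c ^+ 0 * b) = c * a + - c ^+ 1 * b.
Proof. ring. Qed.
Lemma gid4 (R : comRingType) (a a' b c : R) : a + c * b = a + -1 * a' + (a' + c * b).
Proof. ring. Qed.
Lemma gid5 (R : comRingType) (a b q0 : R) (n : nat) : q0 * (a + - q0 ^+ n * b) = q0 * a + - q0 ^+ n.+1 * b.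
Proof. rewrite exprS; ring. Qed.
Lemma gid6 (R : comRingType) (a a' b b' : R) : a + a' + -1 * (b + b') = a + -1 * b + (a' + -1 * b').
Proof. ring. Qed.
Lemma gid7 (R : comRingType) (a b c : R) : c * (a + -1 * b) = c * a + -1 * (c * b).
Proof. ring. Qed.

Lemma inLat_veq t x y : veq x y -> inLat t x -> inLat t y.
Proof. move=> H [l [H1 H2]]; exists l; split => // w; rewrite -H; exact: H2. Qed.
Lemma inLat_nil t : inLat t [::].
Proof. by exists [::]. Qed.
Lemma inLat_cat t x y : inLat t x -> inLat t y -> inLat t (x ++ y).
Proof.
move=> [l1 [H1 V1]] [l2 [H2 V2]]; exists (l1 ++ l2); split.
  by move=> p; rewrite mem_cat => /orP [/H1|/H2].
by move=> w; rewrite !coef_cat V1 V2.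
Qed.
Lemma inLat_scale t c x : inA c -> inLat t x -> inLat t (scale c x).
Proof.
move=> Hc [l [H1 V1]]; exists (scale c l); split.
  move=> p /mapP [p0 Hp0 ->] /=; have [HA Hs] := H1 _ Hp0; split => //; exact: inA_mul.
by move=> w; rewrite !coef_scale V1.
Qed.
Lemma inLat_single t c w : inA c -> size w = t -> inLat t [:: (c, w)].
Proof. move=> Hc Hs; exists [:: (c, w)]; split => // p; by rewrite inE => /eqP ->. Qed.
Lemma inLat_appw t x s : inLat t x -> inLat (t + size s) (appw x s).
Proof.
move=> [l [H1 V1]]; exists (appw l s); split; last exact: veq_appw.
move=> p /mapP [p0 Hp0 ->] /=; have [HA Hs] := H1 _ Hp0; split => //; by rewrite size_cat Hs.
Qed.

Definition Good (n t : nat) (x : Vec) : Prop :=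
  exists y, inLat t y /\ inNn t (x ++ scale (- q ^+ n) y).
Lemma Good_veq n t x x' : veq x x' -> Good n t x -> Good n t x'.
Proof. move=> H [y [Hy HN]]; exists y; split => //; apply: inNn_veq HN; exact: veq_cat. Qed.
Lemma Good_cat n t x x' : Good n t x -> Good n t x' -> Good n t (x ++ x').
Proof.
move=> [y [Hy HN]] [y' [Hy' HN']]; exists (y ++ y'); split; first exact: inLat_cat.
apply: inNn_veq (inNn_cat HN HN') => w.
by rewrite !coef_cat !coef_scale !coef_cat gid1.
Qed.
Lemma Good_scale n t c x : inA c -> Good n t x -> Good n t (scale c x).
Proof.
move=> Hc [y [Hy HN]]; exists (scale c y); split; first exact: inLat_scale.
apply: inNn_veq (inNn_scale c HN) => w.
by rewrite !coef_scale !coef_cat !coef_scale gid2.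
Qed.
Lemma Good_q n t x : Good n t x -> Good n.+1 t (scale q x).
Proof.
move=> [y [Hy HN]]; exists y; split => //.
apply: inNn_veq (inNn_scale q HN) => w.
by rewrite !coef_scale !coef_cat !coef_scale gid5.
Qed.
Lemma Good_modN n t x x' : inNn t (x ++ scale (-1) x') -> Good n t x' -> Good n t x.
Proof.
move=> H0 [y [Hy HN]]; exists y; split => //.
apply: inNn_veq (inNn_cat H0 HN) => w.
rewrite !coef_cat !coef_scale; symmetry; exact: gid4.
Qed.
Lemma Good_ext n t x s : Good n t x -> Good n (t + size s) (appw x s).
Proof.
move=> [y [Hy HN]]; exists (appw y s); split; first exact: inLat_appw.
by have := inNn_appw s HN; rewrite appw_cat appw_scale.
Qed.
Lemma Good_0 t x : inLat t x -> Good 0 t x.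
Proof.
move=> H; exists x; split => //; apply: inNn_veq (inNn_nil t) => w.
by rewrite coef_nil coef_cat coef_scale expr0 mulN1r subrr.
Qed.
Lemma Good_nil n t : Good n t [::].
Proof.
exists [::]; split; first exact: inLat_nil.
by apply: inNn_veq (inNn_nil t) => w; rewrite /=.
Qed.

Lemma gsword_S g k len : gsword g k len.+1 = gstate g k :: gsword g (k + 1) len.
Proof.
rewrite /gsword /= addr0; congr (_ :: _).
have -> : iota 1 len = map (addn 1) (iota 0 len) by rewrite -iotaDl.
by rewrite -map_comp; apply: eq_map => i /=; rewrite PoszD addrA.
Qed.
Lemma gsword_0 g k : gsword g k 0 = [::]. Proof. by []. Qed.
Lemma size_gsword g k len : size (gsword g k len) = len.
Proof. by rewrite size_map size_iota. Qed.
Lemma gsword_cat g k l1 l2 : gsword g k l1 ++ gsword g (k + l1%:Z) l2 = gsword g k (l1 + l2).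
Proof.
elim: l1 k => [|l1 IH] k; first by rewrite addr0.
rewrite addSn !gsword_S cat_cons -IH; congr (_ :: _ ++ _); congr gsword.
by rewrite -addrA -PoszD add1n.
Qed.

Lemma energy_zsh y b : energy (zsh 1 y) b = energy y b - 1.
Proof. rewrite /energy /zsh /=; ring. Qed.
Lemma odd_abs_succ (m : int) : odd (absz (m + 1)) = ~~ odd (absz m).
Proof.
case: m => n.
  by rewrite -PoszD absz_nat addn1 /=.
have -> : Negz n + 1 = - n%:Z by rewrite NegzE -addn1 PoszD opprD addrK.
by rewrite abszN absz_nat NegzE abszN absz_nat /= negbK.
Qed.
Lemma energy_gs g m : energy (gstate g m) (gstate g (m + 1)) = 1.
Proof.
case: g => /=; last by rewrite /energy /= inordK.
rewrite odd_abs_succ; case: (odd (absz m)) => /=; by rewrite /energy /= ?inordK.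
Qed.

Definition termsV (ts : seq (K * bas * bas)) : Vec := [seq (p.1.1, [:: p.1.2; p.2]) | p <- ts].
Definition TC g m (e : int) (p : K * bas * bas) : Prop :=
  [/\ inA p.1.1, energy p.2 (gstate g (m + 1)) <= 0 &
      (inA (p.1.1 / q) \/ - energy p.2 (gstate g (m + 1)) < e)].
Definition RelP g m (e : int) (X : Vec) : Prop :=
  exists ts, inN (X ++ scale (-1) (termsV ts)) /\ forall p, p \in ts -> TC g m e p.

Lemma TC_mono g m e e' p : e <= e' -> TC g m e p -> TC g m e' p.
Proof. move=> H [a b [c|c]]; split => //; [left|right] => //; exact: lt_le_trans c H. Qed.
Lemma RelP_veq g m e X Y : veq X Y -> RelP g m e X -> RelP g m e Y.
Proof. move=> H [ts [HN HT]]; exists ts; split => //; apply: inN_veq HN; exact: veq_cat. Qed.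
Lemma RelP_mono g m e e' X : e <= e' -> RelP g m e X -> RelP g m e' X.
Proof. move=> H [ts [HN HT]]; exists ts; split => // p /HT; exact: TC_mono. Qed.
Lemma RelP_cat g m e X Y : RelP g m e X -> RelP g m e Y -> RelP g m e (X ++ Y).
Proof.
move=> [t1 [H1 T1]] [t2 [H2 T2]]; exists (t1 ++ t2); split.
  apply: inN_veq (inN_cat H1 H2) => w.
  rewrite /termsV map_cat !coef_cat !coef_scale !coef_cat; symmetry; exact: gid6.
by move=> p; rewrite mem_cat => /orP [/T1|/T2].
Qed.
Lemma RelP_scale g m e c X : inA c -> RelP g m e X -> RelP g m e (scale c X).
Proof.
move=> Hc [ts [HN HT]]; exists [seq (c * p.1.1, p.1.2, p.2) | p <- ts]; split.
  apply: inN_veq (inN_scale c HN) => w.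
  have -> : termsV [seq (c * p.1.1, p.1.2, p.2) | p <- ts] = scale c (termsV ts).
    by rewrite /termsV /scale -!map_comp.
  by rewrite !coef_scale !coef_cat !coef_scale gid7.
move=> p /mapP [p0 /HT [H1 H2 H3] ->]; split => //=; first exact: inA_mul.
case: H3 => H3; [left|by right]; rewrite -mulrA; exact: inA_mul.
Qed.
Lemma RelP_term g m e p : TC g m e p -> RelP g m e [:: (p.1.1, [:: p.1.2; p.2])].
Proof.
move=> H; exists [:: p]; split; last by move=> p'; rewrite inE => /eqP ->.
apply: inN_veq inN_nil; apply: veq_sym; exact: veq_cancel.
Qed.
Lemma linext_scale F c V : veq (linext F (scale c V)) (scale c (linext F V)).
Proof.
move=> w; rewrite coef_scale !coef_linext big_map big_distrr /=.
by apply: eq_bigr => p _; rewrite mulrA.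
Qed.

Definition zsum_ts (ts : seq (K * bas * bas)) :=
  flatten [seq [:: (p.1.1, zsh 1 p.1.2, p.2); (p.1.1, p.1.2, zsh 1 p.2)] | p <- ts].
Lemma zsum_terms ts : veq (linext zsum (termsV ts)) (termsV (zsum_ts ts)).
Proof.
elim: ts => [//|p ts IH].
have -> : linext zsum (termsV (p :: ts)) = [:: (p.1.1 * 1, [:: zsh 1 p.1.2; p.2]);
   (p.1.1 * 1, [:: p.1.2; zsh 1 p.2])] ++ linext zsum (termsV ts) by [].
have -> : termsV (zsum_ts (p :: ts)) = [:: (p.1.1, [:: zsh 1 p.1.2; p.2]);
   (p.1.1, [:: p.1.2; zsh 1 p.2])] ++ termsV (zsum_ts ts) by [].
apply: veq_cat => //; by rewrite !mulr1.
Qed.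
Lemma RelP_zsum g m e X : RelP g m e X -> RelP g m (e + 1) (linext zsum X).
Proof.
move=> [ts [HN HT]]; exists (zsum_ts ts); split.
  apply: inN_veq (inN_zsum HN); rewrite linext_cat; apply: veq_cat => //.
  apply: veq_trans (linext_scale _ _ _) _; apply: veq_scale; exact: zsum_terms.
move=> p' /flatten_mapP [p /HT [H1 H2 H3]]; rewrite !inE => /orP [/eqP ->|/eqP ->].
  apply: TC_mono (_ : e <= e + 1) _; first by lia.
  by split.
split => //=; rewrite energy_zsh; set E := energy p.2 (gstate g (m + 1)) in H2 H3 *; first by lia.
case: H3 => H3; [by left|right; lia].
Qed.
Lemma RelP_zz g m e X : RelP g m e X -> RelP g m (e + 1) (linext (zz 1) X).
Proof.
move=> [ts [HN HT]]; exists [seq (p.1.1, zsh 1 p.1.2, zsh 1 p.2) | p <- ts]; split.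
  apply: inN_veq (inN_zz1 HN); rewrite linext_cat; apply: veq_cat => //.
  apply: veq_trans (linext_scale _ _ _) _; apply: veq_scale.
  elim: ts {HT HN} => [//|p ts IH].
  have -> : linext (zz 1) (termsV (p :: ts)) = [:: (p.1.1 * 1, [:: zsh 1 p.1.2; zsh 1 p.2])]
     ++ linext (zz 1) (termsV ts) by [].
  have -> : termsV [seq (p.1.1, zsh 1 p.1.2, zsh 1 p.2) | p <- p :: ts] =
     [:: (p.1.1, [:: zsh 1 p.1.2; zsh 1 p.2])] ++ termsV [seq (p.1.1, zsh 1 p.1.2, zsh 1 p.2) | p <- ts] by [].
  apply: veq_cat => //; by rewrite !mulr1.
move=> p' /mapP [p /HT [H1 H2 H3] ->]; split => //=; rewrite energy_zsh;
  set E := energy p.2 (gstate g (m + 1)) in H2 H3 *; first by lia.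
case: H3 => H3; [by left|right; lia].
Qed.

Definition Tv (a : int) (i : 'I_3) (bm : bas) : Vec := [:: (1, [:: (a, i); bm])].
Lemma Tv_1 a i bm : veq (Tv (a + 1) i bm)
  (linext zsum (Tv a i bm) ++ scale (-1) [:: (1, [:: (a, i); zsh 1 bm])]).
Proof.
rewrite /Tv linext_cons /= => w; rewrite !coef_cons !coef_nil /zsh /=.
case: (_ == w); case: (_ == w); by rewrite ?(mulr1, mul1r, addr0, add0r, mulN1r, mulr0, subrr, addrK, oppr0).
Qed.
Lemma Tv_rec a i bm : veq (Tv (a + 2) i bm)
  (linext zsum (Tv (a + 1) i bm) ++ scale (-1) (linext (zz 1) (Tv a i bm))).
Proof.
rewrite /Tv !linext_cons /= => w; rewrite !coef_cons !coef_nil /=.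
rewrite /zsh /=.
have -> : a + 1 + 1 = a + 2 by rewrite -addrA.
case: (_ == w); case: (_ == w); by rewrite ?(mulr1, mul1r, addr0, add0r, mulN1r, mulr0, subrr, addrK, oppr0).
Qed.

Lemma Rel_rec g m i a0 : RelP g m 0 (Tv a0 i (gstate g m)) ->
  forall k : nat, RelP g m k%:Z (Tv (a0 + k%:Z) i (gstate g m)).
Proof.
move=> H0.
suff H : forall k : nat, RelP g m k%:Z (Tv (a0 + k%:Z) i (gstate g m)) /\
   RelP g m (k.+1)%:Z (Tv (a0 + (k.+1)%:Z) i (gstate g m)) by move=> k; case: (H k).
elim => [|k [IH1 IH2]].
  split; first by rewrite addr0.
  apply: RelP_veq (veq_sym (Tv_1 _ _ _)) _; apply: RelP_cat.
    by have := RelP_zsum H0; rewrite add0r.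
  have E : scale (-1) [:: (1, [:: (a0, i); zsh 1 (gstate g m)])] =
     [:: (-1 * 1, [:: (a0, i); zsh 1 (gstate g m)])] by [].
  rewrite E; apply: (RelP_term (p := (-1 * 1, (a0, i), zsh 1 (gstate g m)))); split => /=.
  - rewrite mulr1; apply: inA_opp; exact: inA_1.
  - by rewrite energy_zsh energy_gs subrr.
  - by right; rewrite energy_zsh energy_gs subrr.
split => //.
have E1 : a0 + (k.+2)%:Z = (a0 + k%:Z) + 2 by rewrite -addrA -PoszD addn2.
have E2 : a0 + (k.+1)%:Z = (a0 + k%:Z) + 1 by rewrite -addrA -PoszD addn1.
rewrite E1; apply: RelP_veq (veq_sym (Tv_rec _ _ _)) _; apply: RelP_cat.
  by have := RelP_zsum IH2; rewrite -E2 -PoszD addn1.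
apply: RelP_scale; first by apply: inA_opp; exact: inA_1.
have := RelP_zz IH1; apply: RelP_mono; lia.
Qed.

Definition amin g m (i : 'I_3) : int := (minn i (2 - (gstate g m).2))%:Z + (gstate g m).1.
Lemma Rel_all g m b :
  (forall i, RelP g m 0 (Tv (amin g m i) i (gstate g m))) ->
  energy b (gstate g m) <= 0 ->
  RelP g m (- energy b (gstate g m)) (Tv b.1 b.2 (gstate g m)).
Proof.
move=> Hb He.
have [k Hk] : exists k : nat, - energy b (gstate g m) = k%:Z.
  by exists (absz (- energy b (gstate g m))); rewrite gez0_abs // oppr_ge0.
rewrite Hk.
have -> : b.1 = amin g m b.2 + k%:Z.
  rewrite -Hk /amin /energy; ring.
exact: Rel_rec.
Qed.

Lemma inN_sE i v : inN (evV v) -> inN (evV (slinext (sactE i) v)).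
Proof. by rewrite -(linext_sh _ (actE_sh i)); exact: inN_E. Qed.
Lemma inN_sF i v : inN (evV v) -> inN (evV (slinext (sactF i) v)).
Proof. by rewrite -(linext_sh _ (actF_sh i)); exact: inN_F. Qed.
Lemma inN_sz1 v : inN (evV v) -> inN (evV (slinext (szz 1) v)).
Proof. by rewrite -(linext_sh _ (zz_sh 1)); exact: inN_zz1. Qed.
Lemma inN_szm v : inN (evV v) -> inN (evV (slinext (szz (-1)) v)).
Proof. by rewrite -(linext_sh _ (zz_sh (-1))); exact: inN_zzm. Qed.
Definition szsum (w : word) : SV :=
  match w with
  | [:: b1; b2] => [:: (CI 1, [:: zsh 1 b1; b2]); (CI 1, [:: b1; zsh 1 b2])]
  | _ => [::]
  end.
Lemma zsum_sh w : zsum w = evV (szsum w).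
Proof. by case: w => [|b1 [|b2 [|b3 w]]]. Qed.
Lemma inN_szs v : inN (evV v) -> inN (evV (slinext szsum v)).
Proof. by rewrite -(linext_sh _ zsum_sh); exact: inN_zsum. Qed.
Lemma inN_ss c v : inN (evV v) -> inN (evV (sscale c v)).
Proof. by rewrite -scale_sh; exact: inN_scale. Qed.
Lemma inN_s0 : inN (evV sv0v0). Proof. by rewrite -v0v0_sh; exact: inN_v0v0. Qed.
Lemma inN_scat x y : inN (evV x) -> inN (evV y) -> inN (evV (x ++ y)).
Proof. by rewrite /evV map_cat; exact: inN_cat. Qed.

Lemma rhs_sh a i bm sts :
  Tv a i bm ++ scale (-1) (termsV [seq (ev t.1.1, t.1.2, t.2) | t <- sts]) =
  evV ((CI 1, [:: (a, i); bm]) :: [seq (CM (CI (-1)) t.1.1, [:: t.1.2; t.2]) | t <- sts]).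
Proof.
rewrite /Tv /evV /scale /termsV /= -!map_comp; congr (_ :: _).
Qed.

Definition allTC (bm' : bas) (sts : seq (cexp * bas * bas)) : Prop :=
  foldr (fun t P => (inA (ev t.1.1) /\ energy t.2 bm' <= 0) /\ P) True sts.
Definition qts (sts : seq (cexp * bas * bas)) := [seq (CM (CQ 1) t.1.1, t.1.2, t.2) | t <- sts].

Lemma base_gen g m a i bm bm' X sts :
  gstate g m = bm -> gstate g (m + 1) = bm' ->
  inN (evV X) ->
  allEq (pairsL X ((CI 1, [:: (a, i); bm]) :: [seq (CM (CI (-1)) t.1.1, [:: t.1.2; t.2]) | t <- qts sts])) ->
  allTC bm' sts ->
  RelP g m 0 (Tv a i (gstate g m)).
Proof.
move=> E1 E2 HX HE HT; exists [seq (ev t.1.1, t.1.2, t.2) | t <- qts sts]; split.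
  apply: inN_veq HX; rewrite E1 rhs_sh; exact: veq_chk.
elim: sts {HE} HT => [//|t sts IH] /= [[h1 h2] HT] p; rewrite inE => /orP [/eqP ->|/(IH HT) //].
split => /=; first by apply: inA_mul => //; rewrite expr1; exact: inA_q.
  by rewrite E2.
left; rewrite expr1 mulrC mulKf //; exact: q_neq0.
Qed.

Lemma inA_divq e e' : (forall (F : fieldType) (x : F), x != 0 -> evF x e / x = evF x e') ->
  inA (ev e') -> inA (ev e / q).
Proof. by move=> H; rewrite H // q_neq0. Qed.

Ltac inA_tac := repeat first [ exact: inA_q | exact: inA_1 | exact: inA_int
   | apply: inA_exp | apply: inA_mul | apply: inA_add | apply: inA_opp ].
Ltac close_nz := try done; repeat (apply/andP; split); try assumption.
Ltac solve_eq := cbn [allEq fst snd]; repeat split; apply: evF_gen => F x h1 h2 h3 h4 h5 /=;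
  rewrite ?qint1F' ?qint2F ?qint3F //; field; close_nz.

Ltac solve_TC := rewrite /allTC; cbn [foldr fst snd];
  repeat split; match goal with
  | |- is_true (energy _ _ <= 0) => vm_compute; reflexivity
  | |- inA _ => rewrite /=; inA_tac end.

Lemma base_B1 m : RelP GB m 0 (Tv 1 o1 (gstate GB m)).
Proof.
apply: (@base_gen GB m 1 o1 (0%R, o1) (0%R, o1)
   (slinext (sactE false) (slinext (sactF true) sv0v0))
   [:: ((CA (CI (-1)) (CM (CI (-1)) (CQ 2))), (1%R, o2), (0%R, ord0)); ((CM (CI (-1)) (CQ 1)), (0%R, o1), (1%R, o1)); ((CA (CI (-1)) (CM (CI (-1)) (CQ 2))), (0%R, ord0), (1%R, o2))]).
- by rewrite /= inord_sinord.
- by rewrite /= inord_sinord.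
- apply: inN_sE; apply: inN_sF; exact: inN_s0.
- comp_pairs; solve_eq.
- solve_TC.
Qed.

Lemma base_B2 m : RelP GB m 0 (Tv 1 o2 (gstate GB m)).
Proof.
apply: (@base_gen GB m 1 o2 (0%R, o1) (0%R, o1)
   (sscale (CM (CQ 3) (CV (CM (CA (CI 1) (CQ 2)) (CA (CA (CI 1) (CQ 2)) (CQ 4))))) (slinext (sactE false) (slinext (sactE false) (slinext (sactE false) (slinext (szz (-1)) sv0v0)))))
   [:: ((CM (CI (-1)) (CQ 1)), (0%R, o1), (1%R, o2))]).
- by rewrite /= inord_sinord.
- by rewrite /= inord_sinord.
- apply: inN_ss; apply: inN_sE; apply: inN_sE; apply: inN_sE; apply: inN_szm; exact: inN_s0.
- comp_pairs; solve_eq.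
- solve_TC.
Qed.

Lemma base_Ao0 m (Hm : odd (absz m)) : RelP GA m 0 (Tv 0 ord0 (gstate GA m)).
Proof.
apply: (@base_gen GA m 0 ord0 (0%R, ord0) (1%R, o2)
   sv0v0
   [::]).
- by rewrite /= Hm.
- by rewrite /= odd_abs_succ Hm /= inord_sinord.
- exact: inN_s0.
- comp_pairs; solve_eq.
- solve_TC.
Qed.

Lemma base_Ao1 m (Hm : odd (absz m)) : RelP GA m 0 (Tv 1 o1 (gstate GA m)).
Proof.
apply: (@base_gen GA m 1 o1 (0%R, ord0) (1%R, o2)
   (slinext (sactE false) sv0v0)
   [:: ((CM (CI (-1)) (CQ 1)), (0%R, ord0), (1%R, o1))]).
- by rewrite /= Hm.
- by rewrite /= odd_abs_succ Hm /= inord_sinord.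
- apply: inN_sE; exact: inN_s0.
- comp_pairs; solve_eq.
- solve_TC.
Qed.

Lemma base_Ao2 m (Hm : odd (absz m)) : RelP GA m 0 (Tv 2 o2 (gstate GA m)).
Proof.
apply: (@base_gen GA m 2 o2 (0%R, ord0) (1%R, o2)
   (sscale (CM (CQ 1) (CV (CA (CI 1) (CQ 2)))) (slinext (sactE false) (slinext (sactE false) sv0v0)))
   [:: ((CI (-1)), (1%R, o1), (1%R, o1)); ((CM (CI (-1)) (CQ 3)), (0%R, ord0), (2%R, o2))]).
- by rewrite /= Hm.
- by rewrite /= odd_abs_succ Hm /= inord_sinord.
- apply: inN_ss; apply: inN_sE; apply: inN_sE; exact: inN_s0.
- comp_pairs; solve_eq.
- solve_TC.
Qed.

Lemma base_Ae0 m (Hm : odd (absz m) = false) : RelP GA m 0 (Tv 1 ord0 (gstate GA m)).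
Proof.
apply: (@base_gen GA m 1 ord0 (1%R, o2) (0%R, ord0)
   (sscale (CM (CQ 1) (CV (CA (CI 1) (CQ 2)))) (slinext (sactF true) (slinext (sactF true) (slinext (szz 1) sv0v0))))
   [:: ((CM (CI (-1)) (CQ 3)), (1%R, o2), (1%R, ord0)); ((CI (-1)), (1%R, o1), (1%R, o1))]).
- by rewrite /= Hm inord_sinord.
- by rewrite /= odd_abs_succ Hm.
- apply: inN_ss; apply: inN_sF; apply: inN_sF; apply: inN_sz1; exact: inN_s0.
- comp_pairs; solve_eq.
- solve_TC.
Qed.

Lemma base_Ae1 m (Hm : odd (absz m) = false) : RelP GA m 0 (Tv 1 o1 (gstate GA m)).
Proof.
apply: (@base_gen GA m 1 o1 (1%R, o2) (0%R, ord0)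
   ((sscale (CM (CQ 1) (CV (CA (CI 1) (CQ 2)))) (slinext (sactE false) (slinext (sactE false) (slinext (sactF true) sv0v0)))) ++ (sscale (CM (CI (-1)) (CM (CQ 3) (CV (CM (CA (CI 1) (CQ 2)) (CA (CA (CI 1) (CQ 2)) (CQ 4)))))) (slinext (sactE false) (slinext (sactE false) (slinext (sactE false) (slinext szsum (slinext (szz (-1)) sv0v0)))))))
   [:: ((CM (CI (-1)) (CQ 1)), (1%R, o2), (1%R, o1))]).
- by rewrite /= Hm inord_sinord.
- by rewrite /= odd_abs_succ Hm.
- apply: inN_scat; [ apply: inN_ss; apply: inN_sE; apply: inN_sE; apply: inN_sF; exact: inN_s0 | apply: inN_ss; apply: inN_sE; apply: inN_sE; apply: inN_sE; apply: inN_szs; apply: inN_szm; exact: inN_s0 ].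
- comp_pairs; solve_eq.
- solve_TC.
Qed.

Lemma base_Ae2 m (Hm : odd (absz m) = false) : RelP GA m 0 (Tv 1 o2 (gstate GA m)).
Proof.
apply: (@base_gen GA m 1 o2 (1%R, o2) (0%R, ord0)
   (sscale (CM (CQ 6) (CV (CM (CM (CA (CI 1) (CQ 2)) (CA (CA (CI 1) (CQ 2)) (CQ 4))) (CA (CA (CA (CI 1) (CQ 2)) (CQ 4)) (CQ 6))))) (slinext (sactE false) (slinext (sactE false) (slinext (sactE false) (slinext (sactE false) (slinext (szz (-1)) sv0v0))))))
   [::]).
- by rewrite /= Hm inord_sinord.
- by rewrite /= odd_abs_succ Hm.
- apply: inN_ss; apply: inN_sE; apply: inN_sE; apply: inN_sE; apply: inN_sE; apply: inN_szm; exact: inN_s0.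
- comp_pairs; solve_eq.
- solve_TC.
Qed.


Lemma base_B0 m : RelP GB m 0 (Tv 0 ord0 (gstate GB m)).
Proof.
apply: (@base_gen GB m 0 ord0 (0%R, o1) (0%R, o1) (slinext (sactF true) sv0v0)
   [:: (CM (CI (-1)) (CQ 1), (0%R, o1), (0%R, ord0))]).
- by rewrite /= inord_sinord.
- by rewrite /= inord_sinord.
- apply: inN_sF; exact: inN_s0.
- comp_pairs; solve_eq.
- solve_TC.
Qed.

Lemma Base_all g m i : RelP g m 0 (Tv (amin g m i) i (gstate g m)).
Proof.
case: i => [[|[|[|i]]] Hi] //.
- have -> : Ordinal Hi = ord0 by apply: val_inj.
  case: g.
    case Hm: (odd (absz m)).
      have -> : amin GA m ord0 = 0 by rewrite /amin /= Hm ?inordK.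
      exact: base_Ao0.
    have -> : amin GA m ord0 = 1 by rewrite /amin /= Hm ?inordK.
    exact: base_Ae0.
  have -> : amin GB m ord0 = 0 by rewrite /amin /= ?inordK.
  exact: base_B0.
- have -> : Ordinal Hi = o1 by apply: val_inj.
  case: g.
    case Hm: (odd (absz m)).
      have -> : amin GA m o1 = 1 by rewrite /amin /= Hm ?inordK.
      exact: base_Ao1.
    have -> : amin GA m o1 = 1 by rewrite /amin /= Hm inordK.
    exact: base_Ae1.
  have -> : amin GB m o1 = 1 by rewrite /amin /= inordK.
  exact: base_B1.
- have -> : Ordinal Hi = o2 by apply: val_inj.
  case: g.
    case Hm: (odd (absz m)).
      have -> : amin GA m o2 = 2 by rewrite /amin /= Hm ?inordK.
      exact: base_Ao2.
    have -> : amin GA m o2 = 1 by rewrite /amin /= Hm inordK.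
    exact: base_Ae2.
  have -> : amin GB m o2 = 1 by rewrite /amin /= inordK.
  exact: base_B2.
Qed.

Definition TVv (beta gamma : word) (ts : seq (K * bas * bas)) : Vec :=
  [seq (p.1.1, beta ++ [:: p.1.2; p.2] ++ gamma) | p <- ts].

Lemma step g n' beta m b ts :
  inN (Tv b.1 b.2 (gstate g m) ++ scale (-1) (termsV ts)) ->
  (forall p, p \in ts -> exists k, Good n' (size beta + 2 + k)
        [:: (p.1.1, beta ++ [:: p.1.2; p.2] ++ gsword g (m + 1) k)]) ->
  exists k, Good n' (size beta + 1 + k) [:: (1, beta ++ b :: gsword g m k)].
Proof.
move=> HN Ht.
have [k Hk] : exists k, Good n' (size beta + 2 + k) (TVv beta (gsword g (m + 1) k) ts).
  elim: ts {HN} Ht => [|p ts IH] Ht; first by exists 0%N; exact: Good_nil.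
  have [k1 H1] := Ht p (mem_head _ _).
  have [k2 H2] : exists k2, Good n' (size beta + 2 + k2) (TVv beta (gsword g (m + 1) k2) ts).
    by apply: IH => p' Hp'; apply: Ht; rewrite inE Hp' orbT.
  exists (maxn k1 k2).
  have E1 : (k1 + (maxn k1 k2 - k1) = maxn k1 k2)%N by rewrite subnKC // leq_maxl.
  have E2 : (k2 + (maxn k1 k2 - k2) = maxn k1 k2)%N by rewrite subnKC // leq_maxr.
  have -> : TVv beta (gsword g (m + 1) (maxn k1 k2)) (p :: ts) =
     [:: (p.1.1, beta ++ [:: p.1.2; p.2] ++ gsword g (m + 1) (maxn k1 k2))] ++
     TVv beta (gsword g (m + 1) (maxn k1 k2)) ts by [].
  apply: Good_cat.
    have := Good_ext (gsword g (m + 1 + k1%:Z) (maxn k1 k2 - k1)) H1.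
    rewrite size_gsword -addnA E1.
    have -> // : appw [:: (p.1.1, beta ++ [:: p.1.2; p.2] ++ gsword g (m + 1) k1)]
       (gsword g (m + 1 + k1%:Z) (maxn k1 k2 - k1)) =
       [:: (p.1.1, beta ++ [:: p.1.2; p.2] ++ gsword g (m + 1) (maxn k1 k2))].
    by rewrite /appw /map -!catA gsword_cat E1.
  have := Good_ext (gsword g (m + 1 + k2%:Z) (maxn k1 k2 - k2)) H2.
  rewrite size_gsword -addnA E2 /appw /TVv -map_comp.
  have -> : [seq (p0.1.1, beta ++ [:: p0.1.2; p0.2] ++ gsword g (m + 1) (maxn k1 k2)) | p0 <- ts] =
     [seq ((fun p1 : K * word => (p1.1, p1.2 ++ gsword g (m + 1 + k2%:Z) (maxn k1 k2 - k2)))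
       \o (fun p0 : K * bas * bas => (p0.1.1, beta ++ [:: p0.1.2; p0.2] ++ gsword g (m + 1) k2))) p0 | p0 <- ts].
    by apply: eq_map => p0 /=; rewrite -!catA /= gsword_cat E2.
  by [].
exists k.+1.
have -> : (size beta + 1 + k.+1 = size beta + 2 + k)%N by lia.
apply: (Good_modN _ Hk).
have := inNn_tens3 (beta := beta) (gamma := gsword g (m + 1) k) HN (erefl _).
rewrite size_gsword tens3_cat tens3_scale.
have -> : tens3 beta (Tv b.1 b.2 (gstate g m)) (gsword g (m + 1) k) =
   [:: (1, beta ++ b :: gsword g m k.+1)] by rewrite gsword_S; move: (b) => [b1 b2].
have -> // : tens3 beta (termsV ts) (gsword g (m + 1) k) = TVv beta (gsword g (m + 1) k) ts.
by rewrite /tens3 /termsV -map_comp.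
Qed.


Definition MainP g n (N : int) := forall beta m b, energy b (gstate g m) <= 0 ->
  - energy b (gstate g m) <= N ->
  exists k, Good n (size beta + 1 + k) [:: (1, beta ++ b :: gsword g m k)].

Lemma main_step g n (N0 : nat) :
  (forall N : nat, MainP g n N%:Z) ->
  (forall beta m b, energy b (gstate g m) <= 0 -> - energy b (gstate g m) < N0%:Z ->
      exists k, Good n.+1 (size beta + 1 + k) [:: (1, beta ++ b :: gsword g m k)]) ->
  MainP g n.+1 N0%:Z.
Proof.
move=> IHn IHin beta m b He HN.
have [ts [HR HT]] := Rel_all (Base_all g m) He.
apply: (step HR) => p Hp; have [H1 H2 H3] := HT p Hp.
have E2 : forall k, (size (beta ++ [:: p.1.2]) + 1 + k = size beta + 2 + k)%N.
  by move=> k; rewrite size_cat /=; lia.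
have Ew : forall k, (beta ++ [:: p.1.2]) ++ p.2 :: gsword g (m + 1) k =
   beta ++ [:: p.1.2; p.2] ++ gsword g (m + 1) k by move=> k; rewrite -catA.
case: H3 => H3.
  have Hab : - energy p.2 (gstate g (m + 1)) <= (absz (- energy p.2 (gstate g (m + 1))))%:Z.
    by rewrite gez0_abs // oppr_ge0.
  have [k Hk] := IHn (absz (- energy p.2 (gstate g (m + 1)))) (beta ++ [:: p.1.2]) (m + 1) p.2 H2 Hab.
  exists k; rewrite -E2 -Ew.
  apply: Good_veq (Good_scale H3 (Good_q Hk)) => w.
  by rewrite coef_scale coef_scale !coef_cons !coef_nil /= !addr0; case: ifP => _;
    rewrite ?mulr0 // mulr1 divfK // q_neq0.
have [k Hk] := IHin (beta ++ [:: p.1.2]) (m + 1) p.2 H2 (lt_le_trans H3 HN).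
exists k; rewrite -E2 -Ew.
apply: Good_veq (Good_scale H1 Hk) => w.
by rewrite coef_scale !coef_cons !coef_nil /= !addr0; case: ifP => _; rewrite ?mulr0 ?mulr1.
Qed.

Lemma main g n (N : nat) : MainP g n N%:Z.
Proof.
elim: n N => [|n IHn] N.
  move=> beta m b _ _; exists 0%N; apply: Good_0; apply: inLat_single; first exact: inA_1.
  by rewrite size_cat /= addn0.
elim: N => [|N IHN].
  apply: main_step; first exact: IHn.
  move=> beta m b He HN.
  exfalso; move: He HN; set E := energy b (gstate g m); lia.
apply: main_step; first exact: IHn.
  move=> beta m b He HN.
apply: (IHN beta m b He); move: HN; set E := energy b (gstate g m); lia.
Qed.

Lemma push0 g m' t y : push g m' t t y = y.
Proof. rewrite /push subnn; elim: y => [//|[c w] y IH] /=; by rewrite cats0 IH. Qed.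

Unset Implicit Arguments.
Theorem mainTheorem6 (g : gss) (m : int) (b : bas) :
  energy b (gstate g m) <= 0 ->
  forall n : nat, (0 < n)%N -> in_qnL g (m - 1) n 1 (Gvec b).
Proof.
move=> He n _.
have Hab : - energy b (gstate g m) <= (absz (- energy b (gstate g m)))%:Z.
  by rewrite gez0_abs // oppr_ge0.
have [k [y [Hy HN]]] := @main g n (absz (- energy b (gstate g m))) [::] m b He Hab.
exists [:: (1, (1 + k)%N, y)], (1 + k)%N; split; first by [].
split.
  by move=> p; rewrite inE => /eqP -> /=; split => //; exact: inA_1.
apply: inNn_veq HN; apply: veq_cat.
  have -> : push g (m - 1) 1 (1 + k) (Gvec b) = [:: (1, b :: gsword g m k)].
    by rewrite /push /Gvec /= subrK addKn.
  by [].
rewrite /= push0 => w; rewrite !coef_scale coef_cat coef_scale coef_nil addr0 mul1r.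
by [].
Qed.
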